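(* If a semigroup $\langle A;\cdot\rangle$ is a Hamiltonian algebra, then for every $a\in A$ there exist integers $i,j$ with $1\le i<j$ such that $a^i=a^j$.
   Context: A semigroup is regarded as an algebra $\langle A;\cdot\rangle$ with one associative binary operation; its subalgebras are the nonempty subsets closed under $\cdot$. An algebra is called Hamiltonian if the universe of every subalgebra is an equivalence class (block) of some congruence of the algebra. *)

(* Defs.v *)
From Stdlib Require Import Arith.

Section SemigroupDefs.
Variable A : Type.
Variable op : A -> A -> A.

Definition associative_op : Prop :=
  forall x y z, op x (op y z) = op (op x y) z.

Definition is_subalgebra (B : A -> Prop) : Prop :=
  (exists x, B x) /\ (forall x y, B x -> B y -> B (op x y)).

Definition is_congruence (theta : A -> A -> Prop) : Prop :=
  (forall x, theta x x) /\
  (forall x y, theta x y -> theta y x) /\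
  (forall x y z, theta x y -> theta y z -> theta x z) /\
  (forall x1 y1 x2 y2, theta x1 y1 -> theta x2 y2 -> theta (op x1 x2) (op y1 y2)).

Definition is_block (theta : A -> A -> Prop) (B : A -> Prop) : Prop :=
  exists x, forall y, B y <-> theta x y.

Definition hamiltonian : Prop :=
  forall B, is_subalgebra B ->
    exists theta, is_congruence theta /\ is_block theta B.

(* spow_aux a n = a^(n+1); spow a i = a^i for i >= 1 (spow a 0 = a, junk). *)
Fixpoint spow_aux (a : A) (n : nat) : A :=
  match n with
  | 0 => a
  | S m => op (spow_aux a m) a
  end.

Definition spow (a : A) (i : nat) : A := spow_aux a (i - 1).

End SemigroupDefs.

(* Main.v *)
Require Import Defs.
From Stdlib Require Import Arith Lia.

Lemma aux_add (A : Type) (op : A -> A -> A) (HA : associative_op A op) (a : A) :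
  forall n m, op (spow_aux A op a m) (spow_aux A op a n) = spow_aux A op a (m + n + 1).
Proof.
  induction n as [|k IH]; intros m.
  - simpl. replace (m + 0 + 1) with (S m) by lia. reflexivity.
  - simpl. rewrite HA, IH. replace (m + S k + 1) with (S (m + k + 1)) by lia.
    reflexivity.
Qed.

Theorem mainTheorem4 (A : Type) (op : A -> A -> A) :
  associative_op A op ->
  hamiltonian A op ->
  forall a : A, exists i j : nat, 1 <= i /\ i < j /\ spow A op a i = spow A op a j.
Proof.
  intros HA HH a.
  set (S := fun n => exists p q, n = 3*p + 5*q /\ 1 <= p + q).
  set (B := fun x => exists n, x = spow_aux A op a n /\ S (n+1)).
  assert (HB : is_subalgebra A op B).
  { split.
    - exists (spow_aux A op a 2). exists 2. split; [reflexivity|]. exists 1, 0. lia.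
    - intros x y [m [-> [p [q [Hm Hpq]]]]] [n [-> [p' [q' [Hn Hpq']]]]].
      exists (m + n + 1). split; [apply aux_add; exact HA|].
      exists (p + p'), (q + q'). lia. }
  destruct (HH B HB) as [th [[Hr [Hs [Ht Hc]]] [x Hx]]].
  assert (H2 : th x (spow_aux A op a 2)).
  { apply Hx. exists 2. split; [reflexivity|]. exists 1, 0. lia. }
  assert (H4 : th x (spow_aux A op a 4)).
  { apply Hx. exists 4. split; [reflexivity|]. exists 0, 1. lia. }
  assert (H24 : th (spow_aux A op a 2) (spow_aux A op a 4)) by eauto.
  assert (H46 : th (spow_aux A op a 4) (spow_aux A op a 6)).
  { pose proof (aux_add A op HA a 1 2) as E1. pose proof (aux_add A op HA a 1 4) as E2.
    change (2+1+1) with 4 in E1. change (4+1+1) with 6 in E2. rewrite <- E1, <- E2. apply Hc; auto. }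
  assert (H6 : B (spow_aux A op a 6)) by (apply Hx; eauto).
  destruct H6 as [n [Hn [p [q [Hpq H1]]]]].
  assert (n <> 6) by lia.
  destruct (Nat.lt_gt_cases n 6) as [[Hlt|Hgt] _]; [assumption| |].
  - exists (n+1), 7. unfold spow. split; [lia|]. split; [lia|].
    replace (n + 1 - 1) with n by lia. simpl (7 - 1). symmetry; exact Hn.
  - exists 7, (n+1). unfold spow. split; [lia|]. split; [lia|].
    replace (n + 1 - 1) with n by lia. simpl (7 - 1). exact Hn.
Qed.
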